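(* Let $W$ be an eventually periodic subset of $\mathbb{Z}^d$ with periods $u_1,\dots,u_d$, and let $\mathscr{W},\mathcal{W},\mathscr{W}_1$ be as defined in the context. Let $M$ be a minimal complement of $W$ in $\mathbb{Z}^d$. Let $M_\infty$ be the union of those fibres $M_{\bar v}$ ($\bar v\in\mathbb{Z}^d/\mathcal{L}$) such that for every real $N$ there exists $x\in M_{\bar v}$ all of whose coordinates with respect to $u_1,\dots,u_d$ are $\leqslant N$. Let $\mathcal{M}\subseteq M_\infty$ be such that $\pi$ restricts to a bijection $\mathcal{M}\to\pi(M_\infty)$. Then: (1) $M_\infty$ is infinite, $\mathcal{M}$ is a nonempty finite set, $\mathscr{W}_1$ is nonempty, and $\pi(\mathcal{M}+(\mathcal{W}\cup\mathscr{W}_1))=\mathbb{Z}^d/\mathcal{L}$. (2) For every $m\in\mathcal{M}$ there exists $w\in\mathscr{W}_1$ such that $m+w\not\equiv m'+w'\pmod{\mathcal{L}}$ for all $m'\in\mathcal{M}$ and all $w'\in\mathcal{W}$.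
   Context: $d\geqslant1$, $\mathbb{N}=\{0,1,2,\dots\}$. Let $u_1,\dots,u_d\in\mathbb{Z}^d$ satisfy no nontrivial $\mathbb{Z}$-linear relation, $\mathcal{L}=\mathbb{Z}u_1+\dots+\mathbb{Z}u_d$, $P=\mathbb{N}u_1+\dots+\mathbb{N}u_d$, $\pi:\mathbb{Z}^d\to\mathbb{Z}^d/\mathcal{L}$ the quotient map, and $X_{\bar v}=X\cap\pi^{-1}(\bar v)$. Coordinates of $x\in\mathbb{Z}^d$ with respect to $u_1,\dots,u_d$ are the unique $t_i\in\mathbb{Q}$ with $x=\sum t_iu_i$. A nonempty $X\subseteq\mathbb{Z}^d$ is eventually periodic with periods $u_1,\dots,u_d$ if $X\subseteq F+P$ for some nonempty finite $F\subseteq\mathbb{Z}^d$ and $x+P\subseteq X$ for all but finitely many $x\in X$. For such $W$: $\mathscr{W}=\{w\in W:w+P\not\subseteq W\}$; $\mathcal{W}=\{w\in W\setminus\mathscr{W}:(w-P)\cap(W\setminus\mathscr{W})=\{w\}\}$; $\mathscr{W}_1$ is the set of elements of $\mathscr{W}$ congruent modulo $\mathcal{L}$ to no element of $\mathcal{W}$. A nonempty $M\subseteq\mathbb{Z}^d$ is a complement of $W$ if $M+W=\mathbb{Z}^d$, and a minimal complement if no proper subset of $M$ is a complement of $W$. *)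

(* Defs.v *)
From mathcomp Require Import all_boot all_order all_algebra.
Set Implicit Arguments. Unset Strict Implicit. Unset Printing Implicit Defensive.
Import Order.TTheory GRing.Theory Num.Theory.
Local Open Scope ring_scope.

Notation vec d := 'rV[int]_d.
Definition vset (d : nat) := vec d -> Prop.

Section Defs.
Variables (d : nat) (u : 'I_d -> vec d).

Definition Zindep : Prop :=
  forall c : 'I_d -> int, \sum_(i < d) u i *~ c i = 0 -> forall i, c i = 0.

Definition inL (x : vec d) : Prop :=
  exists c : 'I_d -> int, x = \sum_(i < d) u i *~ c i.

Definition inP (x : vec d) : Prop :=
  exists c : 'I_d -> nat, x = \sum_(i < d) u i *+ c i.

(* congruence modulo L, i.e. pi x = pi y *)
Definition congL (x y : vec d) : Prop := inL (x - y).

Definition toQ (x : vec d) : 'rV[rat]_d := map_mx (fun z : int => z%:~R) x.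

Definition coords_le (x : vec d) (N : rat) : Prop :=
  exists t : 'I_d -> rat,
    toQ x = \sum_(i < d) t i *: toQ (u i) /\ forall i, t i <= N.

Definition finite_set (A : vset d) : Prop :=
  exists s : seq (vec d), forall x, A x -> x \in s.

Definition nonempty (A : vset d) : Prop := exists x, A x.

Definition eventually_periodic (X : vset d) : Prop :=
  nonempty X /\
  (exists F : vset d, nonempty F /\ finite_set F /\
     forall x, X x -> exists f p, F f /\ inP p /\ x = f + p) /\
  finite_set (fun x => X x /\ ~ (forall p, inP p -> X (x + p))).

Definition Wscr (W : vset d) (w : vec d) : Prop :=
  W w /\ ~ (forall p, inP p -> W (w + p)).

Definition Wcal (W : vset d) (w : vec d) : Prop :=
  (W w /\ ~ Wscr W w) /\
  forall y, (W y /\ ~ Wscr W y) -> inP (w - y) -> y = w.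

Definition Wscr1 (W : vset d) (w : vec d) : Prop :=
  Wscr W w /\ forall w', Wcal W w' -> ~ congL w w'.

Definition is_complement (M W : vset d) : Prop :=
  nonempty M /\ forall z, exists m w, M m /\ W w /\ z = m + w.

Definition minimal_complement (M W : vset d) : Prop :=
  is_complement M W /\
  forall M' : vset d, (forall x, M' x -> M x) -> (exists x, M x /\ ~ M' x) ->
    ~ is_complement M' W.

Definition Minf (M : vset d) (x : vec d) : Prop :=
  M x /\ forall N : rat, exists y, M y /\ congL y x /\ coords_le y N.

End Defs.

(* Main.v *)
Require Import Defs.
From mathcomp Require Import all_boot all_order all_algebra.
From Stdlib Require Import Classical.
From mathcomp Require Import ring lra zify.
Set Implicit Arguments. Unset Strict Implicit. Unset Printing Implicit Defensive.
Import Order.TTheory GRing.Theory Num.Theory.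
Local Open Scope ring_scope.

Section LA.
Variables (d : nat) (u : 'I_d -> vec d).
Hypothesis hu : Zindep u.

Lemma toQ_D (x y : vec d) : toQ (x + y) = toQ x + toQ y.
Proof. by apply/rowP=> j; rewrite !mxE rmorphD. Qed.
Lemma toQ_N (x : vec d) : toQ (- x) = - toQ x.
Proof. by apply/rowP=> j; rewrite !mxE rmorphN. Qed.
Lemma toQ_B (x y : vec d) : toQ (x - y) = toQ x - toQ y.
Proof. by rewrite toQ_D toQ_N. Qed.
Lemma toQ_0 : toQ (0 : vec d) = 0.
Proof. by apply/rowP=> j; rewrite !mxE. Qed.
Lemma toQ_sum (I : finType) (F : I -> vec d) : toQ (\sum_i F i) = \sum_i toQ (F i).
Proof.
apply/rowP=> j; rewrite !mxE summxE rmorph_sum summxE. apply: eq_bigr => i _; by rewrite !mxE.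
Qed.
Lemma toQ_mulz (x : vec d) (c : int) : toQ (x *~ c) = c%:~R *: toQ x.
Proof. apply/rowP=> j; rewrite -scaler_int !mxE intrM; congr (_ * _); by rewrite intz. Qed.
Lemma toQ_inj (x y : vec d) : toQ x = toQ y -> x = y.
Proof. move=> /rowP H; apply/rowP=> j; have := H j; rewrite !mxE; exact: intr_inj. Qed.

Lemma indepQ (t : 'I_d -> rat) : \sum_i t i *: toQ (u i) = 0 -> forall i, t i = 0.
Proof.
move=> H.
pose D : int := \prod_j denq (t j).
pose c i : int := numq (t i) * \prod_(j | j != i) denq (t j).
have cE i : (c i)%:~R = t i * D%:~R.
  by rewrite /c /D [X in _ = _ * X%:~R](bigD1 i) //= !intrM numqE mulrA.
have D0 : D != 0.
  rewrite /D; apply/prodf_neq0 => j _; by rewrite gt_eqF // denq_gt0.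
have : \sum_i u i *~ c i = 0.
  apply: toQ_inj; rewrite toQ_sum toQ_0.
  rewrite (eq_bigr (fun i => D%:~R *: (t i *: toQ (u i)))); last first.
    by move=> k _; rewrite toQ_mulz cE mulrC scalerA.
  by rewrite -scaler_sumr H scaler0.
move/hu=> Hc k; have := Hc k; move/(congr1 (fun z : int => z%:~R : rat)).
rewrite cE /= => /eqP; rewrite mulf_eq0 intr_eq0 (negbTE D0) orbF => /eqP //.
Qed.

Definition Uz : 'M[int]_d := \matrix_(i, j) u i 0 j.
Lemma row_Uz i : row i Uz = u i.
Proof. by apply/rowP=> j; rewrite !mxE; congr (u i _ _); apply/ord_inj; case: (0 : 'I_1) => [[]]. Qed.
Definition Dz : int := \det Uz.

Lemma sum_toQ_mulmx (v : 'rV[rat]_d) : v *m map_mx (intmul 1) Uz = \sum_i v 0 i *: toQ (u i).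
Proof. rewrite mulmx_sum_row; apply: eq_bigr => i _; by rewrite -map_row row_Uz. Qed.

Lemma Dz_neq0 : Dz != 0.
Proof.
apply/negP => /eqP D0.
have : \det (map_mx (intmul (1 : rat)) Uz) == 0.
  by rewrite (det_map_mx (intmul (1 : rat))) -/Dz D0 /=.
case/det0P => v vn0; rewrite sum_toQ_mulmx => /indepQ H.
case/negP: vn0; apply/eqP/rowP => j; rewrite mxE -(H j); congr (v _ _).
Qed.

Definition coord (x : vec d) (i : 'I_d) : rat := ((x *m \adj Uz) 0 i)%:~R / Dz%:~R.

Lemma adjK (x : vec d) : (x *m \adj Uz) *m Uz = Dz *: x.
Proof. by rewrite -mulmxA mul_adj_mx mul_mx_scalar. Qed.

Lemma coordE x : toQ x = \sum_i coord x i *: toQ (u i).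
Proof.
apply/rowP=> j; rewrite summxE.
have := congr1 (fun A : vec d => ((A 0 j)%:~R : rat)) (adjK x).
rewrite /= !mxE rmorph_sum /= => E.
rewrite (eq_bigr (fun i => (Dz%:~R)^-1 * (((x *m \adj Uz) 0 i)%:~R * ((Uz i j)%:~R)))); last first.
  by move=> i _; rewrite /toQ mxE [map_mx _ _ _ _]mxE [Uz i j]mxE /coord mulrA [_ * Dz%:~R^-1]mulrC.
rewrite -mulr_sumr (eq_bigr (fun i => ((x *m \adj Uz) 0 i * Uz i j)%:~R)); last first.
  by move=> i _; rewrite intrM.
rewrite E intrM mulrA mulVf ?mul1r //.
by rewrite intr_eq0 Dz_neq0.
Qed.

Lemma coord_uniq x (t : 'I_d -> rat) : toQ x = \sum_i t i *: toQ (u i) -> forall i, t i = coord x i.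
Proof.
move=> E i; apply/eqP; rewrite -subr_eq0; apply/eqP; move: i; apply: indepQ.
rewrite (eq_bigr (fun i => t i *: toQ (u i) - coord x i *: toQ (u i))); last first.
  by move=> i _; rewrite scalerBl.
by rewrite sumrB -E -coordE subrr.
Qed.

Lemma coords_leP x N : coords_le u x N <-> forall i, coord x i <= N.
Proof.
split.
  by case=> t [E H] i; rewrite -(coord_uniq E).
by move=> H; exists (coord x); split=> //; exact: coordE.
Qed.

Lemma coord_inj x y : (forall i, coord x i = coord y i) -> x = y.
Proof.
move=> H; apply: toQ_inj; rewrite (coordE x) (coordE y); apply: eq_bigr => i _; by rewrite H.
Qed.

Lemma coordD x y i : coord (x + y) i = coord x i + coord y i.
Proof. by rewrite /coord mulmxDl mxE rmorphD mulrDl. Qed.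
Lemma coordN x i : coord (- x) i = - coord x i.
Proof. by rewrite /coord mulNmx mxE rmorphN mulNr. Qed.
Lemma coordB x y i : coord (x - y) i = coord x i - coord y i.
Proof. by rewrite coordD coordN. Qed.
Lemma coord0 i : coord 0 i = 0.
Proof. by rewrite /coord mul0mx mxE mul0r. Qed.

Lemma coord_sumz (c : 'I_d -> int) i : coord (\sum_j u j *~ c j) i = (c i)%:~R.
Proof.
symmetry; move: i; apply: coord_uniq; rewrite toQ_sum; apply: eq_bigr => j _; by rewrite toQ_mulz.
Qed.

Lemma sumn_z (c : 'I_d -> nat) : \sum_j u j *+ c j = \sum_j u j *~ (c j)%:Z.
Proof. by apply: eq_bigr => j _; rewrite -pmulrn. Qed.

Lemma coord_sumn (c : 'I_d -> nat) i : coord (\sum_j u j *+ c j) i = (c i)%:R.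
Proof. by rewrite sumn_z coord_sumz. Qed.

Lemma inL_coord x : inL u x -> exists c : 'I_d -> int, forall i, coord x i = (c i)%:~R.
Proof. by case=> c ->; exists c => i; rewrite coord_sumz. Qed.

Lemma inP_of x : inL u x -> (forall i, 0 <= coord x i) -> inP u x.
Proof.
case=> c -> H; exists (fun i => absz (c i)); rewrite sumn_z; apply: eq_bigr => i _.
have := H i; rewrite coord_sumz ler0z => /gez0_abs ->; done.
Qed.

Lemma inP_inL x : inP u x -> inL u x.
Proof. by case=> c ->; exists (fun i => (c i)%:Z); rewrite sumn_z. Qed.

Lemma inP_coord x : inP u x -> forall i, 0 <= coord x i.
Proof. by case=> c -> i; rewrite coord_sumn ler0n. Qed.

Lemma inP_add x y : inP u x -> inP u y -> inP u (x + y).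
Proof.
case=> c -> [c' ->]; exists (fun i => (c i + c' i)%N); rewrite -big_split /=.
by apply: eq_bigr => i _; rewrite mulrnDr.
Qed.

Lemma inL_add x y : inL u x -> inL u y -> inL u (x + y).
Proof.
case=> c -> [c' ->]; exists (fun i => (c i + c' i)); rewrite -big_split /=.
by apply: eq_bigr => i _; rewrite mulrzDr.
Qed.

Lemma inL_opp x : inL u x -> inL u (- x).
Proof.
case=> c ->; exists (fun i => - c i); rewrite -sumrN.
by apply: eq_bigr => i _; rewrite mulrNz.
Qed.

Lemma inL0 : inL u 0.
Proof. by exists (fun _ => 0); rewrite big1 // => i _; rewrite mulr0z. Qed.

Lemma congL_refl x : congL u x x.
Proof. by rewrite /congL subrr; exact: inL0. Qed.
Lemma congL_sym x y : congL u x y -> congL u y x.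
Proof. by rewrite /congL => /inL_opp; rewrite opprB. Qed.
Lemma congL_trans x y z : congL u x y -> congL u y z -> congL u x z.
Proof.
rewrite /congL => H1 H2; have := inL_add H1 H2.
by rewrite addrA subrK.
Qed.
Lemma congL_add x y a b : congL u x y -> congL u a b -> congL u (x + a) (y + b).
Proof.
rewrite /congL => H1 H2; have := inL_add H1 H2.
by rewrite opprD addrACA.
Qed.
Lemma congL_inL x y : inL u (x - y) -> congL u x y.
Proof. by []. Qed.


Definition rep (k : {ffun 'I_d -> 'I_(absz Dz)}) : vec d :=
  \row_j divz (((\row_i ((k i : nat)%:Z)) *m Uz) 0 j) Dz.

Lemma reps : exists R : seq (vec d), forall x, exists r, r \in R /\ congL u x r.
Proof.
exists [seq rep k | k <- enum {ffun 'I_d -> 'I_(absz Dz)}] => x.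
pose a := x *m \adj Uz.
pose q i := divz (a 0 i) Dz.
pose r i := modz (a 0 i) Dz.
pose y := x - \sum_i u i *~ q i.
have Dn := Dz_neq0.
have DQ : (Dz%:~R : rat) != 0 by rewrite intr_eq0.
have cy i : coord y i = (r i)%:~R / Dz%:~R.
  rewrite coordB coord_sumz /coord -/a.
  rewrite {1}(divz_eq (a 0 i) Dz) -/(q i) -/(r i) rmorphD /= mulrDl rmorphM /= mulfK //.
  by rewrite addrC addKr.
have ya i : (y *m \adj Uz) 0 i = r i.
  apply: (@intr_inj rat); apply: (mulIf DQ).
  have := cy i; rewrite /coord => E; by rewrite -(divfK DQ ((_ *m _) 0 i)%:~R) E divfK.
have rlt i : (absz (r i) < absz Dz)%N.
  have h1 := modz_ge0 (a 0 i) Dn; have h2 := ltz_mod (a 0 i) Dn.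
  rewrite -/(r i) in h1 h2; lia.
pose k := [ffun i => Ordinal (rlt i)].
exists (rep k); split.
  by apply: map_f; rewrite mem_enum.
have -> : rep k = y.
  apply/rowP => j; rewrite mxE.
  have -> : (\row_i ((k i : nat)%:Z)) = y *m \adj Uz.
    apply/rowP => i; rewrite [LHS]mxE ffunE /= ya; apply: gez0_abs; exact: modz_ge0.
  by rewrite adjK mxE mulKz.
rewrite /congL /y opprB addrC subrK.
by exists q.
Qed.

End LA.

Section Gen.

Lemma pigeon (T : eqType) (s : seq T) (P : nat -> T -> Prop) :
  (forall x n m, (m <= n)%N -> P n x -> P m x) ->
  (forall n, exists x, x \in s /\ P n x) -> exists x, x \in s /\ forall n, P n x.
Proof.
elim: s P => [|a s IH] P Pmon H.
  by case: (H 0%N) => x [].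
case: (classic (forall n, P n a)) => [Ha|Ha].
  by exists a; rewrite mem_head.
case: (not_all_ex_not _ _ Ha) => n0 Hn0.
have [x [xs Hx]] : exists x, x \in s /\ forall n, P (n + n0)%N x.
  apply: (IH (fun n x => P (n + n0)%N x)).
    by move=> x n m mn; apply: Pmon; rewrite leq_add2r.
  move=> n; case: (H (n + n0)%N) => x []; rewrite in_cons => /orP [/eqP ->|xs] Px.
    by case: Hn0; apply: Pmon Px; rewrite leq_addl.
  by exists x.
exists x; split; first by rewrite in_cons xs orbT.
by move=> n; apply: Pmon (Hx n); rewrite leq_addr.
Qed.

Lemma finite_bound (T : eqType) (s : seq T) (Q : rat -> T -> Prop) :
  (forall x N N', N' <= N -> Q N x -> Q N' x) ->
  (forall x, x \in s -> exists N, Q N x) -> exists N, forall x, x \in s -> Q N x.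
Proof.
move=> Qmon; elim: s => [|a s IH] H.
  by exists 0 => x.
case: (H a (mem_head _ _)) => N1 HN1.
case: IH => [x xs|N2 HN2]; first by apply: H; rewrite in_cons xs orbT.
exists (- (`|N1| + `|N2|)) => x; rewrite in_cons => /orP [/eqP ->|xs].
  apply: Qmon HN1; have := ler_norm (- N1); rewrite normrN; have := normr_ge0 N2; lra.
apply: Qmon (HN2 x xs); have := ler_norm (- N2); rewrite normrN; have := normr_ge0 N1; lra.
Qed.

Lemma maxP (S : nat -> Prop) B : S 0%N -> (forall n, S n -> (n <= B)%N) ->
  exists n, S n /\ forall m, S m -> (m <= n)%N.
Proof.
elim: B => [|B IH] S0 HB.
  by exists 0%N; split => // m /HB.
case: (classic (S B.+1)) => [SB|SB].
  by exists B.+1.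
apply: IH => // n Sn; have := HB n Sn; rewrite leq_eqVlt => /orP [/eqP E|//].
by rewrite E in Sn.
Qed.

Lemma nat_above (x : rat) : exists n : nat, x <= n%:R.
Proof.
exists (Num.bound `|x|); have := archi_boundP (normr_ge0 x); have := ler_norm x.
move=> h1 h2; apply: le_trans h1 (ltW h2).
Qed.

Lemma lowbound (d : nat) (a : 'I_d -> rat) : exists N : rat, forall i, N <= a i.
Proof.
exists (- \sum_i `|a i|) => i.
have : `|a i| <= \sum_i `|a i|.
  rewrite (bigD1 i) //= lerDl; apply: sumr_ge0 => j _; exact: normr_ge0.
have := ler_norm (- a i); rewrite normrN; lra.
Qed.

Lemma upbound (d : nat) (a : 'I_d -> rat) : exists N : rat, forall i, a i <= N.
Proof.
case: (lowbound (fun i => - a i)) => N H; exists (- N) => i; have := H i; lra.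
Qed.

End Gen.

Section Main.
Variables (d : nat) (hd : (0 < d)%N) (u : 'I_d -> vec d).
Hypothesis hu : Zindep u.
Variables (W M Mc : vset d).
Hypothesis hW : eventually_periodic u W.
Hypothesis hM : minimal_complement M W.
Hypothesis hMc_sub : forall m, Mc m -> Minf u M m.
Hypothesis hMc_inj : forall m m', Mc m -> Mc m' -> congL u m m' -> m = m'.
Hypothesis hMc_surj : forall x, Minf u M x -> exists m, Mc m /\ congL u m x.

Ltac veq := apply: (coord_inj hu) => ?; rewrite ?(coordD, coordB, coordN); lra.

Lemma Wp_shift x p : W x -> ~ Wscr u W x -> inP u p -> W (x + p).
Proof.
move=> Wx nW Pp; apply: NNPP => H; apply: nW; split => // H'; apply: H; exact: H'.
Qed.

Lemma Wp_shift' x p : W x -> ~ Wscr u W x -> inP u p -> ~ Wscr u W (x + p).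
Proof.
move=> Wx nW Pp [_ H]; apply: H => q Pq; rewrite -addrA; apply: Wp_shift => //.
exact: inP_add.
Qed.

Lemma Minf_low x (a : 'I_d -> rat) : Minf u M x ->
  exists y, M y /\ congL u y x /\ forall i, coord u y i <= a i.
Proof.
case=> _ H; case: (lowbound a) => N HN; case: (H N) => y [My [cy /(coords_leP hu) cl]].
exists y; split=> //; split=> // i; exact: le_trans (cl i) (HN i).
Qed.

Definition i0 : 'I_d := Ordinal hd.

Lemma part2 m : Mc m -> exists w, Wscr1 u W w /\
  forall m' w', Mc m' -> Wcal u W w' -> ~ congL u (m + w) (m' + w').
Proof.
move=> Mcm; apply: NNPP => Hn.
have H : forall w, Wscr1 u W w -> exists m' w', Mc m' /\ Wcal u W w' /\ congL u (m + w) (m' + w').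
  move=> w Hw; apply: NNPP => H'; apply: Hn; exists w; split => // m' w' hm hw hc; apply: H'.
  by exists m', w'.
have Mim := hMc_sub Mcm.
have Mm : M m by case: Mim.
case: (Minf_low (fun i => coord u m i - 1) Mim) => m1 [Mm1 [cm1 le1]].
have m1m : m1 <> m.
  move=> E; have := le1 i0; rewrite E; lra.
have Pmm1 : inP u (m - m1).
  apply: (inP_of hu); first exact: congL_sym.
  move=> i; rewrite coordB; have := le1 i; lra.
case: hM => [[_ hcomp] hmin].
apply: (hmin (fun x => M x /\ x <> m)); first by move=> x [].
  by exists m; split => // -[].
split; first by exists m1.
move=> z; case: (hcomp z) => m0 [w0 [Mm0 [Ww0 ->]]].
case: (classic (m0 = m)) => [Em|Nm]; last by exists m0, w0.
subst m0.
case: (classic (Wscr u W w0)) => [Sw0|Sw0].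
  have [m' [w' [Mcm' [Wcw' cg]]]] : exists m' w', Mc m' /\ Wcal u W w' /\ congL u (m + w0) (m' + w').
    case: (classic (Wscr1 u W w0)) => [S1|S1]; first exact: H.
    have [w' [Ww' cw]] : exists w', Wcal u W w' /\ congL u w0 w'.
      apply: NNPP => K; apply: S1; split => // w' Ww' cw; apply: K; by exists w'.
    exists m, w'; split => //; split => //; apply: congL_add => //; exact: congL_refl.
  case: (inL_coord hu cg) => ck Hck.
  have Mim' := hMc_sub Mcm'.
  case: (Minf_low (fun i => coord u (m + w0 - (m' + w')) i + coord u m' i) Mim') => m'' [Mm'' [cm'' le'']].
  pose p := (m + w0 - (m' + w')) + (m' - m'').
  have Pp : inP u p.
    apply: (inP_of hu); first by apply: inL_add => //; exact: congL_sym.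
    move=> i; rewrite /p coordD (coordB u m'); have := le'' i; lra.
  case: Wcw' => [[Ww' nSw'] _].
  exists m'', (w' + p); split; last split.
  - split => // E; subst m''.
    have E2 : w0 = w' + p by veq.
    by apply: (Wp_shift' Ww' nSw' Pp); rewrite -E2.
  - exact: Wp_shift.
  - rewrite /p; veq.
exists m1, (w0 + (m - m1)); split => //; split; last by veq.
apply: Wp_shift => //.
Qed.


Lemma hFs : exists (sF : seq (vec d)) (NF : rat), (forall f, f \in sF -> forall i, NF <= coord u f i) /\
  forall x, W x -> exists f p, f \in sF /\ inP u p /\ x = f + p.
Proof.
case: hW => _ [[F [_ [[sF HsF] HWF]]] _].
have [NF HNF] : exists NF, forall f, f \in sF -> forall i, NF <= coord u f i.
  apply: (finite_bound (Q := fun N f => forall i, N <= coord u f i)).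
    by move=> f N N' le H i; exact: le_trans le (H i).
  by move=> f _; exact: lowbound.
exists sF, NF; split => // x Wx; case: (HWF x Wx) => f [p [Ff [Pp ->]]].
by exists f, p; split => //; exact: HsF.
Qed.

Lemma hF : exists NF : rat, forall x, W x -> forall i, NF <= coord u x i.
Proof.
case: hFs => sF [NF [HNF HWF]].
exists NF => x Wx i; case: (HWF x Wx) => f [p [Ff [Pp ->]]].
rewrite coordD; have := HNF f Ff i; have := inP_coord hu Pp i; lra.
Qed.

Lemma descent w : W w -> ~ Wscr u W w -> exists y, Wcal u W y /\ inP u (w - y).
Proof.
move=> Ww nSw; case: hF => NF HNF.
pose S n := exists c : 'I_d -> nat, (\sum_i c i)%N = n /\
  W (w - \sum_i u i *+ c i) /\ ~ Wscr u W (w - \sum_i u i *+ c i).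
have S0 : S 0%N.
  exists (fun _ => 0%N); rewrite big1 // big1 ?subr0 //.
case: (nat_above (\sum_i (coord u w i - NF))) => B HB.
have SB : forall n, S n -> (n <= B)%N.
  move=> n [c [<- [Wc _]]]; rewrite -(ler_nat rat); apply: le_trans HB.
  rewrite natr_sum; apply: ler_sum => i _.
  have := HNF _ Wc i; rewrite coordB coord_sumn //; lra.
case: (maxP S0 SB) => n [[c [Hc [Wc nSc]]] Hmax].
exists (w - \sum_i u i *+ c i); split; last first.
  have -> : w - (w - \sum_i u i *+ c i) = \sum_i u i *+ c i by veq.
  by exists c.
split; first by split.
move=> y' [Wy' nSy'] [c' Hc'].
have Sn : S (n + \sum_i c' i)%N.
  exists (fun i => c i + c' i)%N; split; first by rewrite big_split /= Hc.
  have -> : w - \sum_i u i *+ (c i + c' i)%N = y'.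
    apply: (coord_inj hu) => i; have := congr1 (fun v => coord u v i) Hc'.
    rewrite /= !coordB !(coord_sumn hu) natrD; lra.
  by split.
have := Hmax _ Sn; rewrite -{2}(addn0 n) leq_add2l leqn0 sum_nat_eq0 => /forallP H0.
apply/eqP; rewrite eq_sym -subr_eq0 Hc' big1 // => i _; by rewrite (eqP (H0 i)).
Qed.


Lemma sumK_P (K : nat) : inP u (\sum_i u i *+ K).
Proof. by exists (fun _ => K). Qed.

Lemma cover z : exists m w, Mc m /\ (Wcal u W w \/ Wscr1 u W w) /\ congL u z (m + w).
Proof.
case: hFs => sF [NF [HNF HsF]].
case: hM => [[_ hcomp] _].
pose Q N f := (forall N', exists y, M y /\ congL u y (z - f) /\ forall i, coord u y i <= N') \/
  (forall y, M y -> congL u y (z - f) -> ~ (forall i, coord u y i <= N)).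
have [Ns HNs] : exists N, forall f, f \in sF -> Q N f.
  apply: finite_bound.
    move=> f N N' le [H|H]; [by left | right] => y My cy Hy; apply: (H y My cy) => i.
    exact: le_trans (Hy i) le.
  move=> f _; case: (classic (forall N', exists y, M y /\ congL u y (z - f) /\ forall i, coord u y i <= N')) => [H|H].
    by exists 0; left.
  case: (not_all_ex_not _ _ H) => N HN; exists N; right => y My cy Hy; apply: HN.
  by exists y.
case: (upbound (coord u z)) => Cz HCz.
case: (nat_above (Cz - NF - Ns)) => K HK.
case: (hcomp (z - \sum_i u i *+ K)) => m [w [Mm [Ww Ez]]].
case: (HsF w Ww) => f [p [fs [Pp Ew]]].
have cm : congL u m (z - f).
  rewrite /congL; have -> : m - (z - f) = - (\sum_i u i *+ K) + - p.
    apply: (coord_inj hu) => i; have := congr1 (fun v => coord u v i) Ez.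
    rewrite Ew /= !(coordB, coordD, coordN); lra.
  apply: inL_add; apply: inL_opp; apply: inP_inL => //; exact: sumK_P.
have lm : forall i, coord u m i <= Ns.
  move=> i; have := congr1 (fun v => coord u v i) Ez.
  rewrite Ew /= !(coordB, coordD, coordN, coord_sumn hu).
  have := HCz i; have := HNF f fs i; have := inP_coord hu Pp i; lra.
have Mim : Minf u M m.
  split => // N; case: (HNs f fs) => [H|H]; last by case: (H m Mm cm lm).
  case: (H N) => y [My [cy ly]]; exists y; split => //; split.
    apply: congL_trans cy _; exact: congL_sym.
  by apply/(coords_leP hu).
case: (hMc_surj Mim) => mc [Mcc cmc].
have cz : congL u z (mc + w).
  rewrite /congL; have -> : z - (mc + w) = (m - mc) + \sum_i u i *+ K.
    apply: (coord_inj hu) => i; have := congr1 (fun v => coord u v i) Ez.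
    rewrite /= !(coordB, coordD, coordN); lra.
  apply: inL_add; [exact: congL_sym | apply: inP_inL; exact: sumK_P].
case: (classic (Wscr u W w)) => [Sw|Sw].
  case: (classic (Wscr1 u W w)) => [S1|S1].
    by exists mc, w; split => //; split => //; right.
  have [w' [Ww' cw]] : exists w', Wcal u W w' /\ congL u w w'.
    apply: NNPP => K'; apply: S1; split => // w' Ww' cw; apply: K'; by exists w'.
  exists mc, w'; split => //; split; first by left.
  apply: congL_trans cz _; apply: congL_add => //; exact: congL_refl.
case: (descent Ww Sw) => y [Wy Py].
exists mc, y; split => //; split; first by left.
apply: congL_trans cz _; apply: congL_add; first exact: congL_refl.
exact: inP_inL.
Qed.


Lemma Minf_ne : exists m0, Minf u M m0.
Proof.
case: hFs => sF [NF [HNF HsF]].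
case: hM => [[_ hcomp] _].
pose P n f := exists m, M m /\ congL u m (- f) /\ forall i, coord u m i <= - (n%:R).
have [f [fs Hf]] : exists f, f \in sF /\ forall n, P n f.
  apply: pigeon.
    move=> f n n' le [m [Mm [cm lm]]]; exists m; split => //; split => // i.
    apply: le_trans (lm i) _; rewrite lerN2 ler_nat //.
  move=> n; case: (nat_above (n%:R - NF)) => K HK.
  case: (hcomp (- \sum_i u i *+ K)) => m [w [Mm [Ww Ez]]].
  case: (HsF w Ww) => f [p [fs [Pp Ew]]].
  exists f; split => //; exists m; split => //; split.
    rewrite /congL; have -> : m - - f = - (\sum_i u i *+ K) + - p.
      apply: (coord_inj hu) => i; have := congr1 (fun v => coord u v i) Ez.
      rewrite Ew /= !(coordB, coordD, coordN); lra.
    apply: inL_add; apply: inL_opp; apply: inP_inL => //; exact: sumK_P.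
  move=> i; have := congr1 (fun v => coord u v i) Ez.
  rewrite Ew /= !(coordB, coordD, coordN, coord_sumn hu).
  have := HNF f fs i; have := inP_coord hu Pp i; lra.
case: (Hf 0%N) => m0 [Mm0 [cm0 _]].
exists m0; split => // N.
case: (nat_above (- N)) => n Hn; case: (Hf n) => y [My [cy ly]].
exists y; split => //; split.
  apply: congL_trans cy _; exact: congL_sym.
apply/(coords_leP hu) => i; have := ly i; lra.
Qed.

Lemma Minf_inf : ~ finite_set (Minf u M).
Proof.
case=> s Hs; case: Minf_ne => m0 Hm0.
have [y [ys Hy]] : exists y, y \in s /\ forall n, Minf u M y /\ coord u y i0 <= - (n%:R).
  apply: pigeon.
    move=> y n n' le [My ly]; split => //; apply: le_trans ly _; rewrite lerN2 ler_nat //.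
  move=> n; case: (Minf_low (fun _ => - (n%:R)) Hm0) => y [My [cy ly]].
  have Miy : Minf u M y.
    split => // N; case: Hm0 => _ H; case: (H N) => y' [My' [cy' ly']].
    exists y'; split => //; split => //; apply: congL_trans cy' _; exact: congL_sym.
  exists y; split; first exact: Hs.
  by split.
case: (nat_above (- coord u y i0 + 1)) => n Hn.
have [_ h] := Hy n; lra.
Qed.

Lemma Mc_fin : finite_set Mc.
Proof.
case: (reps hu) => R HR.
have : forall R : seq (vec d), exists t : seq (vec d), forall m, Mc m ->
    (exists r, r \in R /\ congL u m r) -> m \in t.
  elim => [|a R' [t' Ht']].
    by exists [::] => m _ [r []].
  case: (classic (exists m, Mc m /\ congL u m a)) => [[ma [Mca cma]]|Na].
    exists (ma :: t') => m Mcm [r [rR cmr]]; rewrite in_cons.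
    move: rR; rewrite in_cons => /orP [/eqP E|rR'].
      subst r; apply/orP; left; apply/eqP; apply: hMc_inj => //.
      apply: congL_trans cmr _; exact: congL_sym.
    by apply/orP; right; apply: Ht' => //; exists r.
  exists t' => m Mcm [r [rR cmr]]; move: rR; rewrite in_cons => /orP [/eqP E|rR'].
    by subst r; case: Na; exists m.
  by apply: Ht' => //; exists r.
case/(_ R) => t Ht; exists t => m Mcm; apply: Ht => //; exact: HR.
Qed.

End Main.

Theorem theorem4p9 (d : nat) (hd : (0 < d)%N) (u : 'I_d -> vec d)
  (hu : Zindep u) (W M Mc : vset d)
  (hW : eventually_periodic u W)
  (hM : minimal_complement M W)
  (hMc_sub : forall m, Mc m -> Minf u M m)
  (hMc_inj : forall m m', Mc m -> Mc m' -> congL u m m' -> m = m')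
  (hMc_surj : forall x, Minf u M x -> exists m, Mc m /\ congL u m x) :
  (~ finite_set (Minf u M) /\
   (nonempty Mc /\ finite_set Mc) /\
   nonempty (Wscr1 u W) /\
   (forall z : vec d, exists m w, Mc m /\ (Wcal u W w \/ Wscr1 u W w) /\
                                  congL u z (m + w))) /\
  (forall m, Mc m -> exists w, Wscr1 u W w /\
     forall m' w', Mc m' -> Wcal u W w' -> ~ congL u (m + w) (m' + w')).
Proof.
have P2 := part2 hd hu hM hMc_sub.
have [m0 Hm0] := Minf_ne hu hW hM.
have [mc [Mcc _]] := hMc_surj m0 Hm0.
split; last exact: P2.
split; first exact: (Minf_inf hd hu hW hM).
split; first by split; [exists mc | exact: (Mc_fin hu hMc_inj)].
split; last exact: (cover hu hW hM hMc_surj).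
by case: (P2 mc Mcc) => w [Hw _]; exists w.
Qed.
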